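(* Let $\overline Q$ be a stable $n$-translation quiver with $n$-translation $\tau$. (1) If $p_0=q_0p_0'$ and $p_1=q_1p_1'$ are paths with $t(p_0)=t(p_1)$ such that $q_0,q_1$ are bound paths with $0<l(q_0),l(q_1)\le n+1$, then there are bound paths $p_0'',p_1''$ with $s(p_0'')=s(p_1'')$, $t(p_0'')=t(p_0')$ and $t(p_1'')=t(p_1')$ such that $l(p_0)-l(p_1)=l(p_0')-l(p_0'')+l(p_1'')-l(p_1')$. (2) If $p_1=p_1'q_1$ and $p_2=p_2'q_2$ are paths with $s(p_1)=s(p_2)$ such that $q_1,q_2$ are bound paths with $0<l(q_1),l(q_2)\le n+1$, then there are bound paths $p_1'',p_2''$ with $t(p_1'')=t(p_2'')$, $s(p_1'')=s(p_1')$ and $s(p_2'')=s(p_2')$ such that $l(p_1)-l(p_2)=l(p_1')-l(p_1'')+l(p_2'')-l(p_2')$.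
   Context: $k$ is a field. Bound quivers $(Q_0,Q_1,\rho)$ have relations that are linear combinations of paths of equal length $\ge2$ with common source and target; paths are composed right to left ($qp$ means $p$ followed by $q$); $s(p),t(p),l(p)$ denote source, target, length; a bound path is a path with nonzero image in $kQ/(\rho)$. A stable $n$-translation quiver is the bound quiver of a graded self-injective algebra of Loewy length $n+2$ (generated in degrees $0$ and $1$), together with the bijection $\tau$ of its vertex set induced by the Nakayama permutation; every bound path of length $n+1$ goes from $\tau i$ to $i$ for some vertex $i$. *)

(* Defs.v *)
From HB Require Import structures.
From mathcomp Require Import all_boot all_order all_algebra.
Set Implicit Arguments.
Unset Strict Implicit.
Unset Printing Implicit Defensive.
Import Order.TTheory GRing.Theory Num.Theory.
Local Open Scope ring_scope.

(* A finite quiver: vertices V, arrows A, source sa, target ta.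
   A path is a pair (start vertex, list of arrows in order of traversal).
   Trivial paths e_v are (v, [::]). *)
Definition qpath (V A : finType) := (V * seq A)%type.

Fixpoint walk_ok {V A : finType} (sa ta : A -> V) (v : V) (s : seq A) : bool :=
  if s is a :: s' then (sa a == v) && walk_ok sa ta (ta a) s' else true.

Definition is_path {V A : finType} (sa ta : A -> V) (p : qpath V A) : bool :=
  walk_ok sa ta p.1 p.2.

Definition psrc {V A : finType} (p : qpath V A) : V := p.1.
Definition ptgt {V A : finType} (ta : A -> V) (p : qpath V A) : V :=
  foldl (fun _ a => ta a) p.1 p.2.
Definition plen {V A : finType} (p : qpath V A) : nat := size p.2.

(* composition  q p  =  "p followed by q"  (right-to-left convention);
   defined only when t(p) = s(q) *)
Definition pmul {V A : finType} (ta : A -> V) (q p : qpath V A)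
  : option (qpath V A) :=
  if ptgt ta p == psrc q then Some (psrc p, p.2 ++ q.2) else None.

(* Elements of the path algebra kQ as formal linear combinations of paths. *)
Definition kQ (k : fieldType) (V A : finType) := seq (k * qpath V A).

Section PathAlgebra.
Context {k : fieldType} {V A : finType} (sa ta : A -> V).

Definition kcoef (x : kQ k V A) (w : qpath V A) : k :=
  \sum_(e <- x | e.2 == w) e.1.
Definition kpath (p : qpath V A) : kQ k V A := [:: (1, p)].
Definition kadd (x y : kQ k V A) : kQ k V A := x ++ y.
Definition kscale (c : k) (x : kQ k V A) : kQ k V A :=
  [seq (c * e.1, e.2) | e <- x].
Definition ksub (x y : kQ k V A) : kQ k V A := x ++ kscale (-1) y.
Definition kmul (x y : kQ k V A) : kQ k V A :=
  flatten [seq pmap (fun f => omap (fun w => (e.1 * f.1, w)) (pmul ta e.2 f.2)) y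
          | e <- x].

Definition relation_ok (r : kQ k V A) : Prop :=
  exists (i j : V) (l : nat), (2 <= l)%N /\
    all (fun e => [&& is_path sa ta e.2, psrc e.2 == i, ptgt ta e.2 == j
                    & plen e.2 == l]) r.

(* membership in the two-sided ideal (rho) of kQ: x equals (coefficientwise,
   on paths) a finite sum  sum c * a r b  with a, b paths and r in rho *)
Definition in_ideal (rho : kQ k V A -> Prop) (x : kQ k V A) : Prop :=
  exists ts : seq (k * qpath V A * kQ k V A * qpath V A),
    (forall t, t \in ts ->
       [/\ rho t.1.2, is_path sa ta t.1.1.2 & is_path sa ta t.2]) /\
    forall w, is_path sa ta w ->
      kcoef x w = \sum_(t <- ts)
        t.1.1.1 * kcoef (kmul (kmul (kpath t.1.1.2) t.1.2) (kpath t.2)) w.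

(* congruence modulo (rho): equality in A = kQ/(rho) *)
Definition kcongr (rho : kQ k V A -> Prop) (x y : kQ k V A) : Prop :=
  in_ideal rho (ksub x y).

Definition bound (rho : kQ k V A -> Prop) (p : qpath V A) : Prop :=
  is_path sa ta p /\ ~ in_ideal rho (kpath p).

(* A = kQ/(rho) is (right) self-injective: A_A is injective, stated via
   Baer's criterion.  A right ideal of A is represented by its preimage J in
   kQ (containing (rho)), and a right A-linear map J/(rho) -> A by a
   representative function f. *)
Definition self_injective (rho : kQ k V A -> Prop) : Prop :=
  forall (J : kQ k V A -> Prop) (f : kQ k V A -> kQ k V A),
    (forall x, in_ideal rho x -> J x) ->
    (forall x y, J x -> J y -> J (kadd x y)) ->
    (forall c x, J x -> J (kscale c x)) ->
    (forall x r, J x -> J (kmul x r)) ->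
    (forall x y, J x -> J y -> kcongr rho x y -> kcongr rho (f x) (f y)) ->
    (forall x y, J x -> J y -> kcongr rho (f (kadd x y)) (kadd (f x) (f y))) ->
    (forall c x, J x -> kcongr rho (f (kscale c x)) (kscale c (f x))) ->
    (forall x r, J x -> kcongr rho (f (kmul x r)) (kmul (f x) r)) ->
    exists a, forall x, J x -> kcongr rho (f x) (kmul a x).

(* Loewy length of kQ/(rho) (graded by path length, radical = arrow ideal)
   equals m: all paths of length m vanish, some path of length m-1 does not. *)
Definition loewy_length (rho : kQ k V A -> Prop) (m : nat) : Prop :=
  (forall p, is_path sa ta p -> plen p = m -> in_ideal rho (kpath p)) /\
  (exists p, is_path sa ta p /\ plen p = m.-1 /\ ~ in_ideal rho (kpath p)).

(* (V, A, rho) is the bound quiver of a graded self-injective algebra of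
   Loewy length n+2 (i.e. a stable n-translation quiver; its n-translation
   tau is the induced Nakayama permutation and is not needed below). *)
Definition stable_ntrans_quiver (rho : kQ k V A -> Prop) (n : nat) : Prop :=
  [/\ forall r, rho r -> relation_ok r,
      self_injective rho & loewy_length rho n.+2].

End PathAlgebra.

(* Main.v *)
Require Import Defs.
From HB Require Import structures.
From mathcomp Require Import all_boot all_order all_algebra.
From mathcomp Require Import ring zify.
From Stdlib Require Import Classical ClassicalEpsilon.
Set Implicit Arguments.
Unset Strict Implicit.
Unset Printing Implicit Defensive.
Import Order.TTheory GRing.Theory Num.Theory.
Local Open Scope ring_scope.

Section Dev.
Variables (k : fieldType) (V A : finType) (sa ta : A -> V).

Local Notation qp := (qpath V A).
Local Notation kq := (kQ k V A).
Local Notation path := (is_path sa ta).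
Local Notation pm := (pmul ta).
Local Notation km := (kmul ta).
Local Notation tg := (ptgt ta).
Implicit Types (x y z r : kq) (w p q : qp) (c : k).

Lemma tg_cat v s1 s2 : tg (v, s1 ++ s2) = tg (tg (v, s1), s2).
Proof. by rewrite /ptgt /= foldl_cat. Qed.

Lemma walk_cat v s1 s2 :
  walk_ok sa ta v (s1 ++ s2) = walk_ok sa ta v s1 && walk_ok sa ta (tg (v, s1)) s2.
Proof.
elim: s1 v => [|a s1 IH] v //=.
by rewrite IH /ptgt /= andbA.
Qed.

Lemma pmE (q p : qp) : pm q p = if tg p == psrc q then Some (p.1, p.2 ++ q.2) else None.
Proof. by []. Qed.

Lemma pm_some q p w : pm q p = Some w ->
  [/\ tg p = psrc q, w = (p.1, p.2 ++ q.2), psrc w = psrc p, tg w = tg q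
    & plen w = (plen p + plen q)%N].
Proof.
case: p q => [p1 p2] [q1 q2].
rewrite pmE; case: eqP => // H [<-]; split => //.
  by rewrite tg_cat H.
by rewrite /plen size_cat.
Qed.

Lemma pm_path q p w : pm q p = Some w -> path w = path p && path q.
Proof.
case: p q => [p1 p2] [q1 q2].
by move=> /pm_some [H -> _ _ _]; rewrite /is_path /= walk_cat H.
Qed.

Lemma pm_triv (w : qp) : pm w (psrc w, [::]) = Some w.
Proof. by rewrite pmE eqxx; case: w. Qed.

Lemma pm_assoc (e f g : qp) (H : qp -> k) :
  oapp (fun u => oapp H 0 (pm u g)) 0 (pm e f) =
  oapp (fun u => oapp H 0 (pm e u)) 0 (pm f g).
Proof.
case: e f g => [e1 e2] [f1 f2] [g1 g2].
rewrite !pmE /psrc /=.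
case: (eqVneq (tg (f1, f2)) e1) => Hfe; case: (eqVneq (tg (g1, g2)) f1) => Hgf /=.
- by rewrite !pmE /psrc /= Hgf eqxx tg_cat Hgf Hfe eqxx catA.
- by rewrite pmE /psrc /= (negbTE Hgf).
- by rewrite pmE /psrc /= tg_cat Hgf (negbTE Hfe).
- by [].
Qed.


Definition Phi (z : kq) (H : qp -> k) : k := \sum_(g <- z) g.1 * H g.2.

Lemma kcoefE z w : kcoef z w = Phi z (fun u => (u == w)%:R).
Proof.
rewrite /kcoef /Phi big_mkcond; apply: eq_bigr => g _.
by case: eqP => _; rewrite ?mulr1 ?mulr0.
Qed.

Lemma Phi_nil H : Phi [::] H = 0.
Proof. by rewrite /Phi big_nil. Qed.

Lemma Phi_cat z1 z2 H : Phi (z1 ++ z2) H = Phi z1 H + Phi z2 H.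
Proof. by rewrite /Phi big_cat. Qed.

Lemma Phi_scale c z H : Phi (kscale c z) H = c * Phi z H.
Proof.
by rewrite /Phi big_map mulr_sumr; apply: eq_bigr => g _; rewrite mulrA.
Qed.

Lemma Phi_path p H : Phi (kpath p) H = H p.
Proof. by rewrite /Phi big_seq1 mul1r. Qed.

Lemma Phi_pair c p H : Phi [:: (c, p)] H = c * H p.
Proof. by rewrite /Phi big_seq1. Qed.

Lemma eq_Phi z H1 H2 : (forall v, H1 v = H2 v) -> Phi z H1 = Phi z H2.
Proof. by move=> E; apply: eq_bigr => g _; rewrite E. Qed.

Lemma eq_Phi_seq z H1 H2 : (forall g, g \in z -> H1 g.2 = H2 g.2) -> Phi z H1 = Phi z H2.
Proof. by move=> E; apply: eq_big_seq => g /E ->. Qed.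

Lemma Phi0 z : Phi z (fun _ => 0) = 0.
Proof. by rewrite /Phi big1 // => g _; rewrite mulr0. Qed.

Lemma PhiZ z c H : Phi z (fun v => c * H v) = c * Phi z H.
Proof. by rewrite /Phi mulr_sumr; apply: eq_bigr => g _; rewrite mulrCA. Qed.

Lemma PhiD z H1 H2 : Phi z (fun v => H1 v + H2 v) = Phi z H1 + Phi z H2.
Proof. by rewrite /Phi -big_split; apply: eq_bigr => g _; rewrite mulrDr. Qed.

Lemma Phi_sum I (s : seq I) z (F : I -> qp -> k) :
  Phi z (fun v => \sum_(i <- s) F i v) = \sum_(i <- s) Phi z (F i).
Proof.
rewrite /Phi exchange_big; apply: eq_bigr => g _; by rewrite mulr_sumr.
Qed.

Lemma Phi_km x y H :
  Phi (km x y) H = Phi x (fun e => Phi y (fun f => oapp H 0 (pm e f))).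
Proof.
rewrite /Phi /kmul big_flatten big_map; apply: eq_bigr => e _.
rewrite big_pmap mulr_sumr; apply: eq_bigr => f _.
by case: (pm e.2 f.2) => [u|] /=; rewrite ?mulr0 // mulrA.
Qed.

Lemma Phi_pmap I (h : I -> option (k * qp)) s H :
  Phi (pmap h s) H = \sum_(i <- s) oapp (fun g => g.1 * H g.2) 0 (h i).
Proof. by rewrite /Phi big_pmap. Qed.

Lemma Phi_flatten I (F : I -> kq) s H :
  Phi (flatten (map F s)) H = \sum_(i <- s) Phi (F i) H.
Proof. by rewrite /Phi big_flatten big_map. Qed.

Lemma Phi_filter (P : pred qp) z H :
  Phi [seq e <- z | P e.2] H = Phi z (fun v => if P v then H v else 0).
Proof.
rewrite /Phi big_filter big_mkcond; apply: eq_bigr => g _.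
by case: (P g.2); rewrite ?mulr0.
Qed.

Lemma oapp_Phi (o : option qp) z (G : qp -> qp -> k) :
  oapp (fun u => Phi z (G u)) 0 o = Phi z (fun v => oapp (fun u => G u v) 0 o).
Proof. by case: o => [u|] //=; rewrite Phi0. Qed.

Lemma Phi_assoc x y z H : Phi (km (km x y) z) H = Phi (km x (km y z)) H.
Proof.
rewrite !Phi_km; apply: eq_Phi => e; rewrite Phi_km; apply: eq_Phi => f.
rewrite oapp_Phi; apply: eq_Phi => g; exact: pm_assoc.
Qed.

Lemma Phi_regroup z H (S : seq qp) : uniq S -> {subset map snd z <= S} ->
  Phi z H = \sum_(v <- S) kcoef z v * H v.
Proof.
move=> uS; elim: z => [|g z IH] sub.
  by rewrite Phi_nil big1 // => v _; rewrite /kcoef big_nil mul0r.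
have gS : g.2 \in S by apply: sub; rewrite inE eqxx.
rewrite /Phi big_cons -/(Phi z H) IH; last by move=> v Hv; apply: sub; rewrite inE Hv orbT.
rewrite [RHS](eq_bigr (fun v => (g.2 == v)%:R * g.1 * H v + kcoef z v * H v)); last first.
  move=> v _. rewrite /kcoef big_cons; case: eqP => _; rewrite ?mul1r ?mul0r ?add0r //.
  by rewrite mulrDl.
rewrite big_split /=; congr (_ + _).
rewrite (big_rem _ gS) /= eqxx mul1r big1_seq ?addr0 //.
move=> v /andP [_ Hv]; case: eqP => E; last by rewrite !mul0r.
by move: Hv; rewrite -E (mem_rem_uniqF _ uS).
Qed.

Lemma Phi_ext x y H : (forall v, path v -> kcoef x v = kcoef y v) ->
  (forall v, H v != 0 -> path v) -> Phi x H = Phi y H.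
Proof.
move=> E HP.
pose S := undup (map snd (x ++ y)).
have uS : uniq S by apply: undup_uniq.
rewrite (Phi_regroup H uS); last by move=> v Hv; rewrite mem_undup map_cat mem_cat Hv.
rewrite (Phi_regroup H uS); last by move=> v Hv; rewrite mem_undup map_cat mem_cat Hv orbT.
apply: eq_bigr => v _; case: (eqVneq (H v) 0) => [->|/HP Hv]; first by rewrite !mulr0.
by rewrite E.
Qed.


Lemma sum_pred1_seq (T : eqType) (S : seq T) (x : T) (F : T -> k) :
  uniq S -> x \in S -> \sum_(v <- S) (if x == v then F v else 0) = F x.
Proof.
move=> uS xS; rewrite (big_rem _ xS) /= eqxx big1_seq ?addr0 //.
move=> v /andP [_ Hv]; case: eqP => E //.
by move: Hv; rewrite -E (mem_rem_uniqF _ uS).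
Qed.

Lemma Phi_nz z H : Phi z H != 0 -> exists2 g, g \in z & H g.2 != 0.
Proof.
move=> Hn; apply: NNPP => Hno; move/negP: Hn; apply; apply/eqP.
rewrite -(Phi0 z); apply: eq_Phi_seq => g gz /=.
by case: (eqVneq (H g.2) 0) => // Hg; case: Hno; exists g.
Qed.

Definition chain (a b : qp) (H : qp -> k) (v : qp) : k :=
  oapp (fun u => oapp H 0 (pm u b)) 0 (pm a v).

Lemma Phi_abz a b z H :
  Phi (km (km (kpath a) z) (kpath b)) H = Phi z (chain a b H).
Proof.
rewrite Phi_km (eq_Phi _ (H2 := fun e => oapp H 0 (pm e b))); last first.
  by move=> e; rewrite Phi_path.
by rewrite Phi_km Phi_path.
Qed.

Lemma chain_some a b H v : chain a b H v != 0 ->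
  exists u w, [/\ pm a v = Some u, pm u b = Some w & H w != 0].
Proof.
rewrite /chain; case E1: (pm a v) => [u|] /=; last by rewrite eqxx.
case E2: (pm u b) => [w|] /=; last by rewrite eqxx.
by move=> Hw; exists u, w.
Qed.

Lemma chain_chain a at0 b bt v H :
  chain at0 bt (chain a b H) v =
  match pm a at0, pm bt b with Some a', Some b' => chain a' b' H v | _, _ => 0 end.
Proof.
case: a at0 b bt v => [a1 a2] [t1 t2] [b1 b2] [s1 s2] [v1 v2].
rewrite /chain !pmE /psrc /=.
case: (eqVneq (tg (v1, v2)) t1) => Hv;
case: (eqVneq (tg (s1, s2)) v1) => Hs;
case: (eqVneq (tg (t1, t2)) a1) => Ha; case: (eqVneq (tg (b1, b2)) s1) => Hb.
all: do 6 (rewrite ?pmE /psrc /= ?tg_cat; try rewrite Hv; try rewrite Hs;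
  try rewrite Ha; try rewrite Hb; try rewrite (negbTE Hv); try rewrite (negbTE Hs);
  try rewrite (negbTE Ha); try rewrite (negbTE Hb); rewrite ?eqxx /= ?catA).
all: try by [].
Qed.


Lemma kcoefD x y w : kcoef (kadd x y) w = kcoef x w + kcoef y w.
Proof. by rewrite !kcoefE /kadd Phi_cat. Qed.
Lemma kcoefZ c x w : kcoef (kscale c x) w = c * kcoef x w.
Proof. by rewrite !kcoefE Phi_scale. Qed.
Lemma kcoefB x y w : kcoef (ksub x y) w = kcoef x w - kcoef y w.
Proof. by rewrite /ksub kcoefD kcoefZ mulN1r. Qed.
Lemma kcoefP p w : kcoef (kpath p : kq) w = (p == w)%:R.
Proof. by rewrite kcoefE Phi_path. Qed.
Lemma kcoef_nil w : kcoef ([::] : kq) w = 0.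
Proof. by rewrite kcoefE Phi_nil. Qed.
Lemma kcoefMDl x y r w : kcoef (km (kadd x y) r) w = kcoef (km x r) w + kcoef (km y r) w.
Proof. by rewrite /kmul /kadd map_cat flatten_cat -/(kadd _ _) kcoefD. Qed.
Lemma kcoefMDr x y r w : kcoef (km r (kadd x y)) w = kcoef (km r x) w + kcoef (km r y) w.
Proof.
rewrite !kcoefE !Phi_km -PhiD; apply: eq_Phi => e; by rewrite /kadd Phi_cat.
Qed.
Lemma kcoefMZl c x r w : kcoef (km (kscale c x) r) w = c * kcoef (km x r) w.
Proof. by rewrite !kcoefE !Phi_km Phi_scale. Qed.
Lemma kcoefMZr c x r w : kcoef (km r (kscale c x)) w = c * kcoef (km r x) w.
Proof.
rewrite !kcoefE !Phi_km -PhiZ; apply: eq_Phi => e; by rewrite Phi_scale.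
Qed.
Lemma kcoefMBl x y r w : kcoef (km (ksub x y) r) w = kcoef (km x r) w - kcoef (km y r) w.
Proof. by rewrite /ksub kcoefMDl kcoefMZl mulN1r. Qed.
Lemma kcoefMBr x y r w : kcoef (km r (ksub x y)) w = kcoef (km r x) w - kcoef (km r y) w.
Proof. by rewrite /ksub kcoefMDr kcoefMZr mulN1r. Qed.
Lemma kcoefMA x y z w : kcoef (km (km x y) z) w = kcoef (km x (km y z)) w.
Proof. by rewrite !kcoefE Phi_assoc. Qed.

Variable rho : kq -> Prop.
Hypothesis Hrel : forall r, rho r -> relation_ok sa ta r.
Local Notation I := (in_ideal sa ta rho).

Definition term (t : k * qp * kq * qp) : kq :=
  km (km (kpath t.1.1.2) t.1.2) (kpath t.2).

Definition Yof (ts : seq (k * qp * kq * qp)) : kq :=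
  flatten [seq kscale t.1.1.1 (term t) | t <- ts].

Lemma kcoefY ts w : kcoef (Yof ts) w = \sum_(t <- ts) t.1.1.1 * kcoef (term t) w.
Proof.
rewrite kcoefE /Yof Phi_flatten; apply: eq_bigr => t _; by rewrite Phi_scale kcoefE.
Qed.

Lemma I_ext x y : I x -> (forall w, path w -> kcoef y w = kcoef x w) -> I y.
Proof.
move=> [ts [Hts Hc]] E; exists ts; split => // w Hw; by rewrite E // Hc.
Qed.

Lemma I_nil : I [::].
Proof.
exists [::]; split => // w _; by rewrite big_nil kcoef_nil.
Qed.

Lemma I_add x y : I x -> I y -> I (kadd x y).
Proof.
move=> [ts [Hts Hc]] [ts' [Hts' Hc']]; exists (ts ++ ts'); split.
  by move=> t; rewrite mem_cat => /orP [/Hts|/Hts'].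
by move=> w Hw; rewrite kcoefD big_cat Hc // Hc'.
Qed.

Lemma I_scale c x : I x -> I (kscale c x).
Proof.
move=> [ts [Hts Hc]].
exists [seq (c * t.1.1.1, t.1.1.2, t.1.2, t.2) | t <- ts]; split.
  by move=> t /mapP [t' /Hts H ->].
move=> w Hw; rewrite kcoefZ Hc // big_map mulr_sumr; apply: eq_bigr => t _.
by rewrite mulrA.
Qed.

Lemma I_flat (T : eqType) (F : T -> kq) (s : seq T) : (forall i, i \in s -> I (F i)) ->
  I (flatten (map F s)).
Proof.
elim: s => [|i s IH] H /=; first exact: I_nil.
apply: I_add; first by apply: H; rewrite inE eqxx.
by apply: IH => j Hj; apply: H; rewrite inE Hj orbT.
Qed.

Lemma I_list z : (forall e, e \in z -> I (kpath e.2)) -> I z.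
Proof.
move=> H.
have : I (flatten (map (fun e => kscale e.1 (kpath e.2)) z)).
  by apply: I_flat => e He; apply: I_scale; apply: H.
move=> HI; apply: (I_ext HI) => w _.
rewrite !kcoefE Phi_flatten; apply: eq_bigr => e _.
by rewrite Phi_scale Phi_path.
Qed.

Lemma I_lin x y c1 c2 z : I x -> I y ->
  (forall w, path w -> kcoef z w = c1 * kcoef x w + c2 * kcoef y w) -> I z.
Proof.
move=> Hx Hy E; apply: (I_ext (I_add (I_scale c1 Hx) (I_scale c2 Hy))) => w Hw.
by rewrite E // kcoefD !kcoefZ.
Qed.


Definition lenr r : nat := if r is e :: _ then plen e.2 else 0%N.

Lemma rel_len r : rho r -> forall e, e \in r -> plen e.2 = lenr r.
Proof.
move=> /Hrel [i [j [l [Hl Hall]]]].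
have Hr : forall e, e \in r -> plen e.2 = l.
  by move=> e' /(allP Hall) /and4P [_ _ _ /eqP].
move=> e He; rewrite (Hr e He); case: r Hall He Hr => [|e0 r'] //= _ _ Hr.
by rewrite (Hr e0) // inE eqxx.
Qed.

Lemma rel_len2 r : rho r -> r != [::] -> (2 <= lenr r)%N.
Proof.
move=> Hr; case: r Hr => [|e0 r'] // /Hrel [i [j [l [Hl Hall]]]] _ /=.
by move: Hall => /= /andP [/and4P [_ _ _ /eqP ->] _].
Qed.

Lemma term_supp t w : rho t.1.2 -> kcoef (term t) w != 0 ->
  [/\ psrc w = psrc t.2, tg w = tg t.1.1.2,
      plen w = (plen t.1.1.2 + lenr t.1.2 + plen t.2)%N & (2 <= lenr t.1.2)%N].
Proof.
move=> Hr; rewrite kcoefE /term Phi_abz => /Phi_nz [h hr] /chain_some [u [w' [E1 E2 Hw]]].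
have ew : w' = w by move: Hw => /=; case: (eqVneq w' w) => //= _; rewrite eqxx.
subst w'.
have [_ _ s1 t1 l1] := pm_some E1; have [_ _ s2 t2 l2] := pm_some E2.
have Hl := rel_len Hr hr.
have H2 : (2 <= lenr t.1.2)%N.
  by apply: rel_len2 => //; apply/eqP => E; rewrite E in hr.
split => //; first by rewrite t2 t1.
by rewrite l2 l1 Hl; lia.
Qed.

Lemma I_filter (P : V -> V -> nat -> bool) x : I x ->
  I [seq e <- x | P (psrc e.2) (tg e.2) (plen e.2)].
Proof.
move=> [ts [Hts Hc]].
exists [seq t <- ts | P (psrc t.2) (tg t.1.1.2) (plen t.1.1.2 + lenr t.1.2 + plen t.2)%N].
split; first by move=> t; rewrite mem_filter => /andP [_ /Hts].
move=> w Hw.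
have -> : kcoef [seq e <- x | P (psrc e.2) (tg e.2) (plen e.2)] w =
   if P (psrc w) (tg w) (plen w) then kcoef x w else 0.
  rewrite !kcoefE (Phi_filter (fun v => P (psrc v) (tg v) (plen v))); case: ifP => Hp.
    by apply: eq_Phi => v; case: (eqVneq v w) => [->|_]; rewrite ?Hp //; case: ifP.
  transitivity (Phi x (fun _ => 0)); last exact: Phi0.
  by apply: eq_Phi => v; case: (eqVneq v w) => [->|_]; rewrite ?Hp //; case: ifP.
rewrite big_filter big_mkcond.
have E : forall t, t \in ts ->
   (if P (psrc w) (tg w) (plen w) then t.1.1.1 * kcoef (term t) w else 0) =
   if P (psrc t.2) (tg t.1.1.2) (plen t.1.1.2 + lenr t.1.2 + plen t.2)%N
   then t.1.1.1 * kcoef (term t) w else 0.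
  move=> t /Hts [Hr _ _]; case: (eqVneq (kcoef (term t) w) 0) => [->|Hnz].
    by rewrite mulr0; case: ifP; case: ifP.
  by case: (term_supp Hr Hnz) => -> -> -> _.
case: ifP => Hp.
  by rewrite Hc //; apply: eq_big_seq => t /E; rewrite Hp.
rewrite (eq_big_seq (fun _ => 0)); first by rewrite big1.
by move=> t /E; rewrite Hp.
Qed.

Lemma I_core x a b : I x -> path a -> path b -> I (km (km (kpath a) x) (kpath b)).
Proof.
move=> [ts [Hts Hc]] Ha Hb.
pose h (t : k * qp * kq * qp) := match pm a t.1.1.2, pm t.2 b with
  Some a', Some b' => Some (t.1.1.1, a', t.1.2, b') | _, _ => None end.
exists (pmap h ts); split.
  move=> t'; rewrite mem_pmap => /mapP [t Ht]; rewrite /h.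
  case E1: (pm a _) => [a'|] //; case E2: (pm _ b) => [b'|] // [->] /=.
  have [Hr Hat Hbt] := Hts t Ht; split => //.
    by rewrite (pm_path E1) Ha Hat.
  by rewrite (pm_path E2) Hbt Hb.
move=> w Hw.
rewrite kcoefE Phi_abz (@Phi_ext x (Yof ts)); last first.
- move=> v /chain_some [u [w' [E1 E2 Hw']]].
  have ew : w' = w by move: Hw' => /=; case: (eqVneq w' w) => //= _; rewrite eqxx.
  subst w'; move: Hw; rewrite (pm_path E2) (pm_path E1).
  by case/and3P.
- by move=> v Hv; rewrite kcoefY Hc.
rewrite /Yof Phi_flatten big_pmap; apply: eq_bigr => t _.
rewrite Phi_scale /term Phi_abz (eq_Phi _ (fun v => chain_chain a t.1.1.2 b t.2 v _)).
rewrite /h; case: (pm a t.1.1.2) => [a'|]; case: (pm t.2 b) => [b'|] /=;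
  rewrite ?Phi0 ?mulr0 //.
by rewrite kcoefE Phi_abz.
Qed.

Lemma I_rpath x b : I x -> path b -> I (km x (kpath b)).
Proof.
move=> Hx Hb.
pose Z := flatten (map (fun u : V => km (km (kpath (u, [::])) x) (kpath b)) (enum V)).
have HZ : I Z by apply: I_flat => u _; apply: I_core.
apply: (I_ext HZ) => w Hw.
rewrite !kcoefE Phi_km /Z Phi_flatten.
rewrite (eq_bigr (fun u => Phi x (chain (u, [::]) b (fun u0 => (u0 == w)%:R)))); last first.
  by move=> u _; rewrite Phi_abz.
rewrite -Phi_sum; apply: eq_Phi => v; rewrite Phi_path.
rewrite (eq_bigr (fun u => if tg v == u then oapp (fun u0 => (u0 == w)%:R) 0 (pm v b) else 0)).
  by rewrite sum_pred1_seq ?enum_uniq ?mem_enum.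
move=> u _; rewrite /chain pmE /psrc /=; case: eqP => //= _.
by rewrite cats0 -surjective_pairing.
Qed.

Lemma I_rmul x y : I x -> I (km x y).
Proof.
move=> Hx.
pose Z := flatten (map (fun f => kscale f.1 (km x (kpath f.2))) [seq f <- y | path f.2]).
have HZ : I Z.
  by apply: I_flat => f; rewrite mem_filter => /andP [Hf _]; apply: I_scale; apply: I_rpath.
apply: (I_ext HZ) => w Hw.
rewrite !kcoefE Phi_km /Z Phi_flatten.
rewrite (@eq_Phi x _ (fun e => \sum_(f <- y) f.1 * oapp (fun u => (u == w)%:R) 0 (pm e f.2))) //.
rewrite Phi_sum big_filter [RHS]big_mkcond; apply: eq_bigr => f _.
rewrite PhiZ; case: ifP => Hf.
  by rewrite Phi_scale Phi_km; congr (_ * _); apply: eq_Phi => e; rewrite Phi_path.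
transitivity (f.1 * 0); last by rewrite mulr0.
congr (_ * _); transitivity (Phi x (fun _ => 0)); last exact: Phi0.
apply: eq_Phi => e; case E: (pm e f.2) => [u|] //=.
case: (eqVneq u w) => [eu|] //=; subst u.
by move: Hw; rewrite (pm_path E) Hf.
Qed.


Lemma I_lpath1 u q w : I (kpath u) -> path q -> pm q u = Some w -> I (kpath w).
Proof.
move=> Hu Hq E.
have H := I_core Hu Hq (isT : path (psrc u, [::])).
apply: (I_ext H) => v _.
rewrite !kcoefE Phi_abz Phi_path Phi_path /chain E /=.
have [_ _ s1 _ _] := pm_some E.
by rewrite -s1 pm_triv.
Qed.

Lemma I_rpath1 (z : qp) p w : I (kpath z) -> path p -> pm z p = Some w -> I (kpath w).
Proof.
move=> Hz Hp E.
have H := I_rpath Hz Hp.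
apply: (I_ext H) => v _.
by rewrite !kcoefE Phi_km !Phi_path E.
Qed.

Variable n : nat.
Hypothesis Hlw : forall p, path p -> plen p = n.+2 -> I (kpath p).

Lemma long_I w : path w -> (n.+2 <= plen w)%N -> I (kpath w).
Proof.
move=> Hw Hl.
set m := (plen w - n.+2)%N.
pose R : qp := (w.1, take m w.2).
pose P : qp := (tg R, drop m w.2).
have E : pm P R = Some w by rewrite pmE /psrc /= eqxx cat_take_drop -surjective_pairing.
have := Hw; rewrite /is_path -{1}(cat_take_drop m w.2) walk_cat => /andP [HR HP].
apply: (@I_rpath1 P R w _ HR E); apply: Hlw => //.
by rewrite /plen /= size_drop /m; move: Hl; rewrite /plen; lia.
Qed.

Lemma bound_len w : Defs.bound sa ta rho w -> (plen w <= n.+1)%N.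
Proof.
move=> [Hw Hn]; rewrite leqNgt; apply/negP => Hl; apply: Hn; exact: long_I.
Qed.

Definition rsoc w := Defs.bound sa ta rho w /\
  forall p (z : qp), path p -> (0 < plen p)%N -> pm w p = Some z -> I (kpath z).

Lemma W w (d : kq) : rsoc w ->
  I (ksub (km (kpath w) d) (kscale (kcoef d (psrc w, [::])) (kpath w))).
Proof.
move=> [[Hw _] Hs].
pose h (f : k * qp) := if path f.2 && (0 < plen f.2)%N
   then omap (fun z : qp => (f.1, z)) (pm w f.2) else None.
have HZ : I (pmap h d).
  apply: I_list => e; rewrite mem_pmap => /mapP [f _]; rewrite /h.
  case: ifP => // /andP [Hp Hl]; case E: (pm w f.2) => [z|] //= [->] /=.
  exact: Hs E.
apply: (I_ext HZ) => v Hv.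
rewrite kcoefB kcoefZ kcoefP !kcoefE Phi_km Phi_path Phi_pmap.
rewrite mulrC -PhiZ /Phi -sumrB; apply: eq_bigr => f _; rewrite /h.
case: f => c [x s] /=; case: s => [|a s] /=.
  rewrite pmE /psrc /= /plen /=; case: (eqVneq x w.1) => [->|Hx] /=.
    by rewrite eqxx -surjective_pairing mulr1 subrr.
  have -> : ((x, [::]) == (w.1, [::]) :> qp) = false by apply: negbTE; apply: contra Hx => /eqP [->].
  by rewrite !mulr0 subrr.
have -> : ((x, a :: s) == (psrc w, [::]) :> qp) = false by apply: negbTE; apply/eqP => -[].
rewrite !mulr0 subr0 /plen /= andbT.
case: ifP => Hp; first by case: (pm w (x, a :: s)) => [z|] /=; rewrite ?mulr0.
case E: (pm w (x, a :: s)) => [z|] /=; last by rewrite mulr0.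
case: (eqVneq z v) => [ez|]; last by rewrite mulr0.
by move: Hv; rewrite -ez (pm_path E) Hp.
Qed.


Lemma ext_max N w : Defs.bound sa ta rho w -> (n.+2 - plen w <= N)%N ->
  exists u w', [/\ path u, pm w u = Some w' & rsoc w'].
Proof.
elim: N w => [|N IH] w Hb HN.
  by have := bound_len Hb; move: HN; lia.
case: (classic (exists p (z : qp), [/\ path p, (0 < plen p)%N, pm w p = Some z & ~ I (kpath z)])).
  move=> [p [z [Hp Hl E Hz]]].
  have [Hw _] := Hb.
  have Hbz : Defs.bound sa ta rho z by split => //; rewrite (pm_path E) Hp.
  have [Ep Ez sz tz lz] := pm_some E.
  have [u' [w'' [Hu' E' Hs]]] : exists u w', [/\ path u, pm z u = Some w' & rsoc w'].
    by apply: IH => //; move: HN; rewrite lz; lia.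
  have [Eu' Ew'' _ _ _] := pm_some E'.
  have Epu : pm p u' = Some (u'.1, u'.2 ++ p.2) by rewrite pmE Eu' sz eqxx.
  have [_ _ _ tpu _] := pm_some Epu.
  exists (u'.1, u'.2 ++ p.2), w''; split => //.
    by rewrite (pm_path Epu) Hu' Hp.
  rewrite pmE tpu Ep eqxx Ew'' Ez /= catA.
  by [].
move=> Hno; exists (psrc w, [::]), w; split => //; first exact: pm_triv.
split => // p z Hp Hl E; apply: NNPP => Hz; apply: Hno; by exists p, z.
Qed.

Definition Eid : kq := [seq (1, (v, [::])) | v <- enum V].

Lemma kmE x w : kcoef (km x Eid) w = kcoef x w.
Proof.
rewrite !kcoefE Phi_km; apply: eq_Phi => e.
rewrite /Phi /Eid big_map /=.
rewrite (eq_bigr (fun v => if e.1 == v then (e == w)%:R else 0)).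
  by rewrite sum_pred1_seq ?enum_uniq ?mem_enum.
move=> v _; rewrite mul1r pmE /psrc /ptgt /=; rewrite eq_sym.
by case: (eqVneq e.1 v) => //= <-; rewrite -surjective_pairing.
Qed.

Lemma kmnil x w : kcoef (km x [::]) w = 0.
Proof.
rewrite kcoefE Phi_km; transitivity (Phi x (fun _ => 0)); last exact: Phi0.
by apply: eq_Phi => e; rewrite Phi_nil.
Qed.

Lemma I_lin3 x y u c1 c2 c3 z : I x -> I y -> I u ->
  (forall w, path w -> kcoef z w = c1 * kcoef x w + c2 * kcoef y w + c3 * kcoef u w) -> I z.
Proof.
move=> Hx Hy Hu E.
apply: (I_ext (I_add (I_add (I_scale c1 Hx) (I_scale c2 Hy)) (I_scale c3 Hu))) => w Hw.
by rewrite E // !kcoefD !kcoefZ.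
Qed.

Hypothesis Hinj : self_injective sa ta rho.

Lemma LR X z : (forall d, I (km X d) -> I (km z d)) -> exists a, I (ksub z (km a X)).
Proof.
move=> Hyp.
pose J x := exists y, I (ksub x (km X y)).
pose yof x := match excluded_middle_informative (J x) with
  | left H => proj1_sig (constructive_indefinite_description _ H) | right _ => [::] end.
have yofP : forall x, J x -> I (ksub x (km X (yof x))).
  move=> x Jx; rewrite /yof; case: excluded_middle_informative => // H.
  by case: constructive_indefinite_description.
pose f x := km z (yof x).
have key : forall y y', I (ksub (km X y) (km X y')) -> I (ksub (km z y) (km z y')).
  move=> y y' H.
  have /Hyp H2 : I (km X (ksub y y')) by apply: (I_ext H) => w _; rewrite kcoefB kcoefMBr.
  by apply: (I_ext H2) => w _; rewrite kcoefMBr kcoefB.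
have H1 : forall x, I x -> J x.
  move=> x Hx; exists [::]; apply: (I_ext Hx) => w _; by rewrite kcoefB kmnil subr0.
have H2 : forall x y, J x -> J y -> J (kadd x y).
  move=> x y [yx Hx] [yy Hy]; exists (kadd yx yy).
  apply: (I_lin (c1 := 1) (c2 := 1) Hx Hy) => w _.
  rewrite !kcoefB !kcoefD kcoefMDr; ring.
have H3 : forall c x, J x -> J (kscale c x).
  move=> c x [yx Hx]; exists (kscale c yx).
  apply: (I_lin (c1 := c) (c2 := 0) Hx Hx) => w _.
  rewrite !kcoefB !kcoefZ kcoefMZr; ring.
have H4 : forall x r, J x -> J (km x r).
  move=> x r [yx Hx]; exists (km yx r).
  have Hr := I_rmul r Hx.
  apply: (I_lin (c1 := 1) (c2 := 0) Hr Hr) => w _.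
  rewrite !kcoefB kcoefMBl kcoefMA; ring.
have H5 : forall x y, J x -> J y -> kcongr sa ta rho x y ->
    kcongr sa ta rho (f x) (f y).
  move=> x y Jx Jy Hxy; apply: key.
  apply: (I_lin3 (c1 := -1) (c2 := 1) (c3 := 1) (yofP x Jx) (yofP y Jy) Hxy) => w _.
  rewrite !kcoefB; ring.
have H6 : forall x y, J x -> J y ->
    kcongr sa ta rho (f (kadd x y)) (kadd (f x) (f y)).
  move=> x y Jx Jy.
  have Hk : I (ksub (km z (yof (kadd x y))) (km z (kadd (yof x) (yof y)))).
    apply: key.
    apply: (I_lin3 (c1 := -1) (c2 := 1) (c3 := 1) (yofP _ (H2 _ _ Jx Jy)) (yofP x Jx) (yofP y Jy)) => w _.
    rewrite !kcoefB !kcoefD kcoefMDr; ring.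
  by apply: (I_ext Hk) => w _; rewrite /f !kcoefB !kcoefD kcoefMDr.
have H7 : forall c x, J x ->
    kcongr sa ta rho (f (kscale c x)) (kscale c (f x)).
  move=> c x Jx.
  have Hk : I (ksub (km z (yof (kscale c x))) (km z (kscale c (yof x)))).
    apply: key.
    apply: (I_lin (c1 := -1) (c2 := c) (yofP _ (H3 c _ Jx)) (yofP x Jx)) => w _.
    rewrite !kcoefB !kcoefZ kcoefMZr; ring.
  by apply: (I_ext Hk) => w _; rewrite /f !kcoefB !kcoefZ kcoefMZr.
have H8 : forall x r, J x ->
    kcongr sa ta rho (f (km x r)) (km (f x) r).
  move=> x r Jx.
  have Hk : I (ksub (km z (yof (km x r))) (km z (km (yof x) r))).
    apply: key.
    apply: (I_lin (c1 := -1) (c2 := 1) (yofP _ (H4 x r Jx)) (I_rmul r (yofP x Jx))) => w _.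
    rewrite !kcoefB kcoefMBl kcoefMA; ring.
  by apply: (I_ext Hk) => w _; rewrite /f !kcoefB kcoefMA.
have [a Ha] := Hinj H1 H2 H3 H4 H5 H6 H7 H8.
exists a.
have JX : J X by exists Eid; apply: (I_ext I_nil) => w _; rewrite kcoefB kmE subrr kcoef_nil.
have HX := Ha X JX.
have Hk : I (ksub (km z Eid) (km z (yof X))).
  apply: key; apply: (I_ext (yofP X JX)) => w _; by rewrite !kcoefB kmE.
apply: (I_lin (c1 := 1) (c2 := 1) Hk HX) => w _.
rewrite !kcoefB kmE /f; ring.
Qed.


Implicit Types (a d : kq) (v : qp).

Lemma kcoef_filt (P : V -> V -> nat -> bool) x w :
  kcoef [seq e <- x | P (psrc e.2) (tg e.2) (plen e.2)] w =
  if P (psrc w) (tg w) (plen w) then kcoef x w else 0.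
Proof.
rewrite !kcoefE (Phi_filter (fun v => P (psrc v) (tg v) (plen v))); case: ifP => Hp.
  by apply: eq_Phi => v; case: (eqVneq v w) => [->|_]; rewrite ?Hp //; case: ifP.
transitivity (Phi x (fun _ => 0)); last exact: Phi0.
by apply: eq_Phi => v; case: (eqVneq v w) => [->|_]; rewrite ?Hp //; case: ifP.
Qed.

Lemma I_filt_ext (P : V -> V -> nat -> bool) x y : I x ->
  (forall v, path v -> kcoef y v = if P (psrc v) (tg v) (plen v) then kcoef x v else 0) -> I y.
Proof.
move=> Hx E; apply: (I_ext (I_filter P Hx)) => v Hv; by rewrite kcoef_filt E.
Qed.

Lemma bound_scal z c w : I z -> (forall v, path v -> kcoef z v = c * (w == v)%:R) ->
  Defs.bound sa ta rho w -> c = 0.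
Proof.
move=> Hz E [_ Hw]; apply: NNPP => Hc; apply: Hw.
apply: (I_ext (I_scale c^-1 Hz)) => v Hv.
by rewrite kcoefZ E // kcoefP mulrA mulVf ?mul1r //; apply/eqP.
Qed.

Lemma kmw_aux a w : forall v, kcoef (km a (kpath w)) v =
  Phi a (fun e => oapp (fun u => (u == v)%:R) 0 (pm e w)).
Proof.
move=> v; rewrite kcoefE Phi_km; apply: eq_Phi => e; by rewrite Phi_path.
Qed.

Lemma kmw_len a w v : (plen v < plen w)%N -> kcoef (km a (kpath w)) v = 0.
Proof.
move=> Hl; rewrite kmw_aux; transitivity (Phi a (fun _ => 0)); last exact: Phi0.
apply: eq_Phi => e; case E: (pm e w) => [u|] //=.
case: (eqVneq u v) => // euv; subst u.
have [_ _ _ _ l] := pm_some E; move: Hl; rewrite l; lia.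
Qed.

Lemma kmw_src a w v : psrc v != psrc w -> kcoef (km a (kpath w)) v = 0.
Proof.
move=> Hs; rewrite kmw_aux; transitivity (Phi a (fun _ => 0)); last exact: Phi0.
apply: eq_Phi => e; case E: (pm e w) => [u|] //=.
case: (eqVneq u v) => // euv; subst u.
have [_ _ s _ _] := pm_some E; by rewrite s eqxx in Hs.
Qed.

Lemma kmw_eq a w v : plen v = plen w ->
  kcoef (km a (kpath w)) v = kcoef a (tg w, [::]) * (w == v)%:R.
Proof.
move=> Hl; rewrite kmw_aux kcoefE mulrC -PhiZ; apply: eq_Phi => e.
case: e => x [|b s].
  rewrite pmE /psrc /=; case: (eqVneq (tg w) x) => [->|Hx] /=.
    by rewrite cats0 -surjective_pairing eqxx mulr1.
  have -> : ((x, [::]) == (tg w, [::]) :> qp) = false.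
    by apply: negbTE; apply: contra Hx => /eqP [->].
  by rewrite mulr0.
have -> : ((x, b :: s) == (tg w, [::]) :> qp) = false by apply: negbTE; apply/eqP => -[].
rewrite mulr0; case E: (pm (x, b :: s) w) => [u|] //=.
case: (eqVneq u v) => // euv; subst u.
have [_ _ _ _ l] := pm_some E; move: Hl; rewrite l /plen /=; lia.
Qed.

Lemma kmq_eq q d v : plen v = plen q ->
  kcoef (km (kpath q) d) v = kcoef d (psrc q, [::]) * (q == v)%:R.
Proof.
move=> Hl; rewrite kcoefE Phi_km Phi_path kcoefE mulrC -PhiZ; apply: eq_Phi => f.
case: f => x [|b s].
  rewrite pmE /psrc /ptgt /=; case: (eqVneq x q.1) => [->|Hx] /=.
    by rewrite -surjective_pairing eqxx mulr1.
  have -> : ((x, [::]) == (q.1, [::]) :> qp) = false.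
    by apply: negbTE; apply: contra Hx => /eqP [->].
  by rewrite mulr0.
have -> : ((x, b :: s) == (q.1, [::]) :> qp) = false by apply: negbTE; apply/eqP => -[].
rewrite mulr0; case E: (pm q (x, b :: s)) => [u|] //=.
case: (eqVneq u v) => // euv; subst u.
have [_ _ _ _ l] := pm_some E; move: Hl; rewrite l /plen /=; lia.
Qed.

Lemma W0 w d : rsoc w -> kcoef d (psrc w, [::]) = 0 -> I (km (kpath w) d).
Proof.
move=> Hw H0; apply: (I_ext (W d Hw)) => v _.
by rewrite kcoefB kcoefZ H0 mul0r subr0.
Qed.

Lemma W_lam w d : rsoc w -> I (km (kpath w) d) -> kcoef d (psrc w, [::]) = 0.
Proof.
move=> Hw Hd.
have HL : I (kscale (kcoef d (psrc w, [::])) (kpath w)).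
  apply: (I_lin (c1 := 1) (c2 := -1) Hd (W d Hw)) => v _.
  rewrite kcoefB kcoefZ; ring.
apply: (bound_scal HL _ (proj1 Hw)) => v _; by rewrite kcoefZ kcoefP.
Qed.

Lemma LRsoc w w' : rsoc w -> rsoc w' -> psrc w = psrc w' ->
  exists a, I (ksub (kpath w') (km a (kpath w))).
Proof.
move=> Hw Hw' Es; apply: LR => d Hd; apply: W0 => //.
by rewrite -Es; apply: W_lam.
Qed.

Lemma soc_len w w' : rsoc w -> rsoc w' -> psrc w = psrc w' -> (plen w <= plen w')%N.
Proof.
move=> Hw Hw' Es; have [a Ha] := LRsoc Hw Hw' Es.
rewrite leqNgt; apply/negP => Hlt; apply: (proj2 (proj1 Hw')).
apply: (I_ext (I_filter (fun _ _ l => l == plen w') Ha)) => v Hv.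
rewrite (kcoef_filt (fun _ _ l => l == plen w')) kcoefB kcoefP; case: (eqVneq (plen v) (plen w')) => Hl.
  by rewrite kmw_len ?subr0 // Hl.
by case: (eqVneq w' v) => // E; rewrite E eqxx in Hl.
Qed.

Lemma soc_tg w w' : rsoc w -> rsoc w' -> psrc w = psrc w' -> tg w = tg w'.
Proof.
move=> Hw Hw' Es.
have Hl : plen w = plen w' by apply/eqP; rewrite eqn_leq !soc_len.
have [a Ha] := LRsoc Hw Hw' Es.
apply: NNPP => Ht; apply: (proj2 (proj1 Hw')).
apply: (I_filt_ext (P := fun _ t l => (t == tg w') && (l == plen w')) Ha) => v Hv /=.
rewrite kcoefB kcoefP; case: ifP => /andP.
  move=> [/eqP Et /eqP El]; rewrite kmw_eq ?El //.
  have -> : (w == v) = false by apply/negbTE/eqP => E; apply: Ht; rewrite E.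
  by rewrite mulr0 subr0.
move=> H; case: (eqVneq w' v) => // E; subst v; exfalso; apply: H; by rewrite !eqxx.
Qed.

Lemma diff_src w0 w1 : rsoc w0 -> rsoc w1 -> tg w0 = tg w1 -> psrc w0 = psrc w1.
Proof.
move=> H0 H1 Et; apply: NNPP => Hs.
pose X : kq := kadd (kpath w0) (kpath w1).
have [a Ha] : exists a, I (ksub (kpath w0) (km a X)).
  apply: LR => d Hd; apply: W0 => //.
  have HL : I (kadd (kscale (kcoef d (psrc w0, [::])) (kpath w0))
                    (kscale (kcoef d (psrc w1, [::])) (kpath w1))).
    apply: (I_lin3 (c1 := 1) (c2 := -1) (c3 := -1) Hd (W d H0) (W d H1)) => v _.
    rewrite /X kcoefMDl !kcoefB !kcoefD !kcoefZ; ring.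
  have HL2 : I (kscale (kcoef d (psrc w0, [::])) (kpath w0)).
    apply: (I_filt_ext (P := fun s _ _ => s == psrc w0) HL) => v _.
    rewrite kcoefZ kcoefD !kcoefZ !kcoefP; case: ifP => /eqP Hv.
      have -> : (w1 == v) = false by apply/negbTE/eqP => E; apply: Hs; rewrite -Hv E.
      by rewrite mulr0 addr0.
    case: (eqVneq w0 v) => [E|_]; last by rewrite mulr0.
    by rewrite -E in Hv.
  apply: (bound_scal HL2 _ (proj1 H0)) => v _; by rewrite kcoefZ kcoefP.
set lam := kcoef a (tg w1, [::]).
have Hl : lam = 0.
  have HL : I (kscale (- lam) (kpath w1)).
  apply: (I_filt_ext (P := fun s _ l => (s == psrc w1) && (l == plen w1)) Ha) => v Hv.
  rewrite kcoefZ kcoefB !kcoefP /X kcoefMDr; case: ifP => /andP.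
    move=> [/eqP Es /eqP El]; rewrite (kmw_src _ (w := w0)); last by rewrite Es; apply/eqP => E; apply: Hs.
    rewrite kmw_eq //.
    have -> : (w0 == v) = false by apply/negbTE/eqP => E; apply: Hs; rewrite E.
    rewrite -/lam (_ : false%:R = 0) //; ring.
  move=> H; case: (eqVneq w1 v) => [E|]; last by rewrite mulr0.
  by rewrite -E in H; exfalso; apply: H; split.
  have Hn : - lam = 0 by apply: (bound_scal HL _ (proj1 H1)) => v _; rewrite kcoefZ kcoefP.
  by rewrite -[lam]opprK Hn oppr0.
apply: (proj2 (proj1 H0)).
apply: (I_filt_ext (P := fun s _ l => (s == psrc w0) && (l == plen w0)) Ha) => v Hv.
rewrite kcoefB kcoefP /X kcoefMDr; case: ifP => /andP.
  move=> [/eqP Es /eqP El]; rewrite (kmw_src _ (w := w1)); last first.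
    by rewrite Es; apply/eqP => E; apply: Hs.
  by rewrite kmw_eq // Et -/lam Hl; ring.
move=> H; case: (eqVneq w0 v) => // E; by rewrite -E in H; exfalso; apply: H; split.
Qed.


Lemma triv_bound j : Defs.bound sa ta rho (j, [::]).
Proof.
split => //; move=> [ts [Hts Hc]].
have := Hc (j, [::]) isT; rewrite kcoefP eqxx.
rewrite big_seq_cond big1 => [/eqP|t /andP [Ht _]]; first by rewrite oner_eq0.
case: (eqVneq (kcoef (term t) (j, [::])) 0) => [->|Hn]; first by rewrite mulr0.
have [Hr _ _] := Hts t Ht.
case: (term_supp Hr Hn) => _ _ Hl H2; move: Hl H2; rewrite /plen /=; lia.
Qed.

Lemma partD q zj : Defs.bound sa ta rho q -> rsoc zj -> psrc zj = psrc q ->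
  exists u, [/\ Defs.bound sa ta rho u, psrc u = tg q, tg u = tg zj
              & (plen u + plen q)%N = plen zj].
Proof.
move=> Hq Hz Es.
have [a Ha] : exists a, I (ksub (kpath zj) (km a (kpath q))).
  apply: LR => d Hd; apply: W0 => //; rewrite Es.
  have HL : I (kscale (kcoef d (psrc q, [::])) (kpath q)).
    apply: (I_filt_ext (P := fun _ _ l => l == plen q) Hd) => v _.
    rewrite kcoefZ kcoefP; case: ifP => /eqP Hl; first by rewrite kmq_eq.
    case: (eqVneq q v) => [E|]; last by rewrite mulr0.
    by rewrite -E in Hl.
  by apply: (bound_scal HL _ Hq) => v _; rewrite kcoefZ kcoefP.
apply: NNPP => Hno.
pose h (e : k * qp) := if path e.2 then
  (if pm e.2 q is Some y then
     (if (tg y == tg zj) && (plen y == plen zj) then Some (e.1, y) else None)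
   else None) else None.
have HZ : I (pmap h a).
  apply: I_list => g; rewrite mem_pmap => /mapP [e _]; rewrite /h.
  case: ifP => // Hp; case E: (pm e.2 q) => [y|] //.
  case: ifP => // /andP [/eqP Ht /eqP Hl] [->] /=.
  apply: NNPP => Hy; apply: Hno; exists e.2.
  have [Eq _ _ ty ly] := pm_some E.
  split => //.
  - split => // He; apply: Hy; exact: (I_rpath1 He (proj1 Hq) E).
  - by rewrite -ty.
  - by rewrite ly in Hl; rewrite -Hl addnC.
have HF := I_filter (fun _ t l => (t == tg zj) && (l == plen zj)) Ha.
apply: (proj2 (proj1 Hz)).
apply: (I_lin (c1 := 1) (c2 := 1) HF HZ) => v Hv.
rewrite (kcoef_filt (fun _ t l => (t == tg zj) && (l == plen zj))).
rewrite kcoefB kcoefP kmw_aux kcoefE Phi_pmap; case: ifP => HP.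
  rewrite [Phi a _](_ : _ = \sum_(i <- a) oapp (fun g : k * qp => g.1 * (g.2 == v)%:R) 0 (h i)).
    by ring.
  apply: eq_bigr => e _.
  rewrite /h; case: ifP => Hp; case E: (pm e.2 q) => [y|] /=; rewrite ?mulr0 //.
    case: ifP => HPy /=; first by [].
    case: (eqVneq y v) => [Ey|]; last by rewrite mulr0.
    by rewrite -Ey HPy in HP.
  case: (eqVneq y v) => [Ey|]; last by rewrite mulr0.
  by move: Hv; rewrite -Ey (pm_path E) Hp andbF.
rewrite !mul1r add0r.
have -> : (zj == v) = false.
  by apply/negbTE/eqP => E; rewrite -E !eqxx in HP.
rewrite big1 // => e _.
rewrite /h; case: ifP => Hp //; case E: (pm e.2 q) => [y|] //=.
case: ifP => HPy //=; case: (eqVneq y v) => [Ey|]; last by rewrite mulr0.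
by rewrite -Ey HPy in HP.
Qed.


Lemma main_sec :
  (forall p0 p0' q0 p1 p1' q1 : qpath V A,
      is_path sa ta p0' -> is_path sa ta p1' ->
      pmul ta q0 p0' = Some p0 -> pmul ta q1 p1' = Some p1 ->
      ptgt ta p0 = ptgt ta p1 ->
      Defs.bound sa ta rho q0 -> Defs.bound sa ta rho q1 ->
      (0 < plen q0 <= n.+1)%N -> (0 < plen q1 <= n.+1)%N ->
      exists p0'' p1'' : qpath V A,
        Defs.bound sa ta rho p0'' /\ Defs.bound sa ta rho p1'' /\
            psrc p0'' = psrc p1'' /\ ptgt ta p0'' = ptgt ta p0' /\
            ptgt ta p1'' = ptgt ta p1' /\
            (plen p0)%:Z - (plen p1)%:Z =
            (plen p0')%:Z - (plen p0'')%:Z + (plen p1'')%:Z - (plen p1')%:Z)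
  /\
  (forall p1 p1' q1 p2 p2' q2 : qpath V A,
      is_path sa ta p1' -> is_path sa ta p2' ->
      pmul ta p1' q1 = Some p1 -> pmul ta p2' q2 = Some p2 ->
      psrc p1 = psrc p2 ->
      Defs.bound sa ta rho q1 -> Defs.bound sa ta rho q2 ->
      (0 < plen q1 <= n.+1)%N -> (0 < plen q2 <= n.+1)%N ->
      exists p1'' p2'' : qpath V A,
        Defs.bound sa ta rho p1'' /\ Defs.bound sa ta rho p2'' /\
            ptgt ta p1'' = ptgt ta p2'' /\ psrc p1'' = psrc p1' /\
            psrc p2'' = psrc p2' /\
            (plen p1)%:Z - (plen p2)%:Z =
            (plen p1')%:Z - (plen p1'')%:Z + (plen p2'')%:Z - (plen p2')%:Z).
Proof.
split.
  move=> p0 p0' q0 p1 p1' q1 _ _ Ep0 Ep1 Et Hb0 Hb1 _ _.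
  have [u0 [w0 [Hu0 E0 Hs0]]] := ext_max (N := n.+2) Hb0 (leq_subr _ _).
  have [u1 [w1 [Hu1 E1 Hs1]]] := ext_max (N := n.+2) Hb1 (leq_subr _ _).
  have [t0 _ s0 tw0 l0] := pm_some E0.
  have [t1 _ s1 tw1 l1] := pm_some E1.
  have [t0' _ _ tp0 lp0] := pm_some Ep0.
  have [t1' _ _ tp1 lp1] := pm_some Ep1.
  have Ets : tg w0 = tg w1 by rewrite tw0 tw1 -tp0 -tp1.
  have Es := diff_src Hs0 Hs1 Ets.
  have El : plen w0 = plen w1 by apply/eqP; rewrite eqn_leq !soc_len.
  exists u0, u1; split.
    split => // H; apply: (proj2 (proj1 Hs0)); exact: I_lpath1 H (proj1 Hb0) E0.
  split.
    split => // H; apply: (proj2 (proj1 Hs1)); exact: I_lpath1 H (proj1 Hb1) E1.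
  split; first by rewrite -s0 -s1.
  split; first by rewrite t0 t0'.
  split; first by rewrite t1 t1'.
  move: El; rewrite l0 l1 lp0 lp1 => El; lia.
move=> p1 p1' q1 p2 p2' q2 _ _ Ep1 Ep2 Es Hb1 Hb2 _ _.
have Hz : forall j : V, exists z : qp, rsoc z /\ tg z = j.
  move=> j; have [u [w' [_ E Hs]]] := ext_max (N := n.+2) (triv_bound j) (leq_subr _ _).
  exists w'; split => //; have [_ _ _ -> _] := pm_some E; by [].
pose zof j := proj1_sig (constructive_indefinite_description _ (Hz j)).
have zofP : forall j, rsoc (zof j) /\ tg (zof j) = j.
  by move=> j; rewrite /zof; case: constructive_indefinite_description.
pose sig j := psrc (zof j).
have inj : injective sig.
  move=> j1 j2 E; have [H1 T1] := zofP j1; have [H2 T2] := zofP j2.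
  by rewrite -T1 -T2; apply: soc_tg.
have [t1 _ s1 _ l1] := pm_some Ep1.
have [t2 _ s2 _ l2] := pm_some Ep2.
have /codomP [j Ej] := injF_onto inj (psrc q1).
have [Hzj Tzj] := zofP j.
have [u1 [Bu1 Su1 Tu1 Lu1]] := partD Hb1 Hzj (esym Ej).
have [u2 [Bu2 Su2 Tu2 Lu2]] := partD Hb2 Hzj (etrans (esym Ej) (etrans (esym s1) (etrans Es s2))).
exists u1, u2; split => //; split => //.
split; first by rewrite Tu1 Tu2.
split; first by rewrite Su1 t1.
split; first by rewrite Su2 t2.
move: Lu2; rewrite -Lu1 l1 l2 => E; lia.
Qed.

End Dev.

Unset Implicit Arguments.

Theorem lemma4p2 (k : fieldType) (V A : finType) (sa ta : A -> V)
  (rho : kQ k V A -> Prop) (n : nat) :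
  stable_ntrans_quiver sa ta rho n ->
  (forall p0 p0' q0 p1 p1' q1 : qpath V A,
      is_path sa ta p0' -> is_path sa ta p1' ->
      pmul ta q0 p0' = Some p0 -> pmul ta q1 p1' = Some p1 ->
      ptgt ta p0 = ptgt ta p1 ->
      bound sa ta rho q0 -> bound sa ta rho q1 ->
      (0 < plen q0 <= n.+1)%N -> (0 < plen q1 <= n.+1)%N ->
      exists p0'' p1'' : qpath V A,
        bound sa ta rho p0'' /\ bound sa ta rho p1'' /\
            psrc p0'' = psrc p1'' /\ ptgt ta p0'' = ptgt ta p0' /\
            ptgt ta p1'' = ptgt ta p1' /\
            (plen p0)%:Z - (plen p1)%:Z =
            (plen p0')%:Z - (plen p0'')%:Z + (plen p1'')%:Z - (plen p1')%:Z)
  /\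
  (forall p1 p1' q1 p2 p2' q2 : qpath V A,
      is_path sa ta p1' -> is_path sa ta p2' ->
      pmul ta p1' q1 = Some p1 -> pmul ta p2' q2 = Some p2 ->
      psrc p1 = psrc p2 ->
      bound sa ta rho q1 -> bound sa ta rho q2 ->
      (0 < plen q1 <= n.+1)%N -> (0 < plen q2 <= n.+1)%N ->
      exists p1'' p2'' : qpath V A,
        bound sa ta rho p1'' /\ bound sa ta rho p2'' /\
            ptgt ta p1'' = ptgt ta p2'' /\ psrc p1'' = psrc p1' /\
            psrc p2'' = psrc p2' /\
            (plen p1)%:Z - (plen p2)%:Z =
            (plen p1')%:Z - (plen p1'')%:Z + (plen p2'')%:Z - (plen p2')%:Z).
Proof.
move=> [Hrel Hinj [Hlw _]].
exact: (main_sec Hrel Hlw Hinj).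
Qed.
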